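(* Let $R$ be a finite group and let $T<R$ be a proper subgroup. Suppose that $[R:T]=\prod_{i=1}^{\ell}p_i^{c_i}$, where the $p_i$ are distinct primes and $c_i>0$. Then \[ |\mathrm{Sub}(R,T)| \leq [R:T]^{\ell-1}\prod_{i=1}^{\ell} S(p_i,c_i). \]
   Context: $\mathrm{Sub}(R,T)=\{H\le R : T\le H\}$. For a prime $p$ let $C(p)=\prod_{i\ge 1}\frac{1}{1-p^{-i}}$ and $c(p)=2.129\,C(p)$. For a prime $p$ and a positive integer $a$ define $S(p,1)=2$, $S(p,2)=p+3$, $S(p,3)=2p^2+2p+4$, $S(p,4)=p^4+3p^3+4p^2+3p+5$, $S(p,5)=2p^6+2p^5+6p^4+6p^3+6p^2+4p+6$, and $S(p,a)=c(p)\,p^{a^2/2}$ for $a\ge 6$. *)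

(* Defs.v *)
From Stdlib Require Import Reals.
From Coquelicot Require Import Coquelicot.
From mathcomp Require Import all_boot all_fingroup.

Set Implicit Arguments. Unset Strict Implicit. Unset Printing Implicit Defensive.

Definition SubRT (gT : finGroupType) (R T : {group gT}) : {set {group gT}} :=
  [set H : {group gT} | (T \subset H) && (H \subset R)].

Local Open Scope R_scope.

Fixpoint Cpartial (p : nat) (n : nat) : R :=
  match n with
  | O => 1
  | S m => Cpartial p m * / (1 - / (INR p ^ (S m)))
  end.

Definition Cconst (p : nat) : R := real (Lim_seq (Cpartial p)).

Definition cconst (p : nat) : R := 2129 / 1000 * Cconst p.

(* S(p,a); the value at a = 0 is irrelevant (c_i > 0) and is taken from the generic branch *)
Definition Sfun (p a : nat) : R :=
  let x := INR p in
  match a with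
  | 1 => 2
  | 2 => x + 3
  | 3 => 2 * x ^ 2 + 2 * x + 4
  | 4 => x ^ 4 + 3 * x ^ 3 + 4 * x ^ 2 + 3 * x + 5
  | 5 => 2 * x ^ 6 + 2 * x ^ 5 + 6 * x ^ 4 + 6 * x ^ 3 + 6 * x ^ 2 + 4 * x + 6
  | _ => cconst p * Rpower x (INR (a * a)%N / 2)
  end.

(* Main.v *)
Require Import Defs.
From Stdlib Require Import ZArith Reals Lra Lia.
From Coquelicot Require Import Coquelicot.
From HB Require Import structures.
From mathcomp Require Import all_boot all_fingroup pgroup sylow.
From mathcomp Require Import zify.

Set Implicit Arguments. Unset Strict Implicit. Unset Printing Implicit Defensive.

Section CC.
Local Open Scope R_scope.
Variable p : nat.
Hypothesis hp : 2 <= INR p.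

Let y := / INR p.

Lemma y_bounds : 0 < y <= /2.
Proof. rewrite /y. split. apply: Rinv_0_lt_compat; lra. apply: Rinv_le_contravar; lra. Qed.

Lemma z_eq m : / (INR p ^ (S m)) = y ^ (S m).
Proof. by rewrite /y pow_inv. Qed.

Lemma ypow_le m : 0 < y ^ (S m) <= y.
Proof.
have [h1 h2] := y_bounds. elim: m => [|m [IH1 IH2]]; first by simpl; lra.
have -> : y ^ (S (S m)) = y * y ^ (S m) by [].
set z := y ^ (S m) in IH1 IH2 *. split; nra.
Qed.

Lemma Cp_S m : Cpartial p (S m) = Cpartial p m * / (1 - / (INR p ^ (S m))).
Proof. by []. Qed.

Lemma Cp_pos n : 0 < Cpartial p n.
Proof.
elim: n => [|n IH] /=; first lra.
rewrite -/(INR p ^ (S n)) z_eq. have [h1 h2] := ypow_le n. have [h3 h4] := y_bounds.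
apply: Rmult_lt_0_compat => //. apply: Rinv_0_lt_compat. simpl in *. lra.
Qed.

Lemma Cp_incr n : Cpartial p n <= Cpartial p (S n).
Proof.
rewrite [Cpartial p (S n)]/=. rewrite -/(INR p ^ (S n)) z_eq.
have [h1 h2] := ypow_le n. have [h3 h4] := y_bounds. have h5 := Cp_pos n.
set z := y ^ (S n) in h1 h2 *.
rewrite -[X in X <= _]Rmult_1_r. apply: Rmult_le_compat_l; first lra.
rewrite -Rinv_1. apply: Rinv_le_contravar; lra.
Qed.

Lemma Cp_inv n : Cpartial p (S n) * (1 + 2 * y ^ (S n)) * (1 - y) <= 1 + 2 * y.
Proof.
have [h3 h4] := y_bounds.
elim: n => [|n IH].
  rewrite /= -/(INR p ^ 1) z_eq /= !Rmult_1_r Rmult_1_l.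
  have -> : / (1 - y) * (1 + 2 * y) * (1 - y) = (1 + 2 * y) * (/ (1 - y) * (1 - y)) by ring.
  rewrite Rinv_l; lra.
rewrite (Cp_S (S n)) z_eq.
have [h1 h2] := ypow_le n. set C := Cpartial p (S n) in IH *.
have hC : 0 < C by apply: Cp_pos.
set z := y ^ (S n) in h1 h2 IH *.
have -> : y ^ (S (S n)) = y * z by [].
clearbody z.
have hzy : 0 < 1 - y * z by nra.
set w := / (1 - y * z).
have hw : w * (1 - y * z) = 1 by rewrite /w Rinv_l; lra.
have hw0 : 0 < w by apply: Rinv_0_lt_compat.
have k1 : y * z <= /2 * /2 by apply: Rmult_le_compat; lra.
have k2 : 0 <= z * (2 - 3 * y - 2 * (y * z)) by apply: Rmult_le_pos; lra.
have e : (1 + 2 * z) * (1 - y * z) - (1 + 2 * (y * z)) = z * (2 - 3 * y - 2 * (y * z)) by ring.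
have key : 1 + 2 * (y * z) <= (1 + 2 * z) * (1 - y * z).
  move: e k2. generalize ((1 + 2 * z) * (1 - y * z)) (z * (2 - 3 * y - 2 * (y * z))). move=> A B e1 e2. lra.
have : C * w * (1 + 2 * (y * z)) * (1 - y) <= C * w * ((1 + 2 * z) * (1 - y * z)) * (1 - y).
  apply: Rmult_le_compat_r; first lra. apply: Rmult_le_compat_l; last exact: key.
  apply: Rmult_le_pos; lra.
have -> : C * w * ((1 + 2 * z) * (1 - y * z)) * (1 - y) = C * (1 + 2 * z) * (1 - y) * (w * (1 - y * z)) by ring.
rewrite hw Rmult_1_r => hh. lra.
Qed.

Lemma Cp_le4 n : Cpartial p n <= 4.
Proof.
case: n => [|n]; first by simpl; lra.
have h := Cp_inv n. have [h1 h2] := ypow_le n. have [h3 h4] := y_bounds.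
have h5 := Cp_pos (S n).
set C := Cpartial p (S n) in h h5 *. set z := y ^ (S n) in h h1 h2.
clearbody C z.
have g1 : 0 <= C * (1 - y) * (2 * z) by apply: Rmult_le_pos; [apply: Rmult_le_pos|]; lra.
have g2 : C * (1 - y) <= 1 + 2 * y.
  have e : C * (1 + 2 * z) * (1 - y) = C * (1 - y) + C * (1 - y) * (2 * z) by ring.
  lra.
have g3 : C * (/2) <= C * (1 - y) by apply: Rmult_le_compat_l; lra.
lra.
Qed.

Lemma Cconst_ge1 : 1 <= Cconst p.
Proof.
have hex : ex_finite_lim_seq (Cpartial p) by apply: (ex_finite_lim_seq_incr _ 4); [exact: Cp_incr | exact: Cp_le4].
have hl := Lim_seq_correct' _ hex.
have := is_lim_seq_incr_compare _ _ hl Cp_incr 0. rewrite /Cconst /=. done.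
Qed.
End CC.

Lemma key_exp c i : (6 <= c)%N -> (i <= c)%N -> (2 * ((c - i + 1) * i + (c - 3)) <= c * c)%N.
Proof. move=> h1 h2.
have ec : c = (i + (c - i))%N by lia.
rewrite ec addKn. 
have e : forall u v : nat, (3 <= u + v)%N -> (2 * ((v + 1) * u + (u + v - 3)) <= (u + v) * (u + v))%N.
  move=> u v h.
  have h3 := Z.square_nonneg (Z.of_nat u - 2). have h4 := Z.square_nonneg (Z.of_nat v - 1).
  nia.
apply: e. lia.
Qed.

Lemma key2 c : (6 <= c)%N -> (c + 1 <= 2 ^ (c - 3))%N.
Proof.
move=> h. have [k ->] : exists k, c = (k + 6)%N by exists (c - 6)%N; lia.
elim: k => [|k IH] //. rewrite (_ : (k.+1 + 6 - 3 = (k + 6 - 3).+1)%N); last by lia.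
rewrite expnS. lia.
Qed.


Section PP.
Local Open Scope R_scope.
Variable p : nat.
Hypothesis pr : prime p.

Fixpoint Bnd (a j : nat) : R :=
  match j, a with
  | 0, _ => 1
  | S j', 0 => 0
  | S j', S a' => ((INR p ^ (S a') - 1) / (INR p ^ (S j') - 1) * Bnd a' j')
  end.

Lemma one_le_div a b : 0 < b -> b <= a -> 1 <= a / b.
Proof. move=> hb hab. apply: (Rmult_le_reg_r b) => //. rewrite /Rdiv Rmult_assoc Rinv_l; lra. Qed.

Lemma p_ge2 : (2 <= INR p).
Proof. have := prime_gt1 pr. move/leP => H. apply: (le_INR 2). lia. Qed.
Let hp := p_ge2.

Lemma powp_gt1 k : (0 < k)%N -> (1 < INR p ^ k).
Proof.
case: k => // k _. have h := p_ge2.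
elim: k => [|k IH]; first by simpl; lra.
rewrite /= in IH *. nra.
Qed.

Lemma powp_ge1 k : (1 <= INR p ^ k).
Proof. case: k => [|k]; first by simpl; lra. by apply: Rlt_le; apply: powp_gt1. Qed.

Lemma Bnd_ge0 a j : (0 <= Bnd a j).
Proof.
elim: j a => [|j IH] [|a] /=; try lra.
apply: Rmult_le_pos; last exact: IH.
have h1 := powp_ge1 (S a). have h2 := @powp_gt1 (S j) isT.
apply: Rdiv_le_0_compat; simpl in *; lra.
Qed.

Lemma Bnd_zero a j : (a < j)%N -> Bnd a j = 0.
Proof.
elim: a j => [|a IH] [|j] //= h. by rewrite IH // Rmult_0_r.
Qed.

Lemma powp_le k m : (k <= m)%N -> (INR p ^ k <= INR p ^ m).
Proof.
move=> /leP h. apply: Rle_pow; last by lia.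
have := p_ge2; lra.
Qed.

Lemma Bnd_step b i : (Bnd b i <= Bnd b.+1 i.+1).
Proof.
case: (leqP i b) => h; last by rewrite Bnd_zero // ; apply: Bnd_ge0.
rewrite [Bnd b.+1 i.+1]/=.
have h0 := Bnd_ge0 b i.

have h2 : (INR p ^ i.+1 <= INR p ^ b.+1) by apply: powp_le.
have h3 := powp_gt1 (isT : (0 < i.+1)%N).
rewrite -[X in (X <= _)]Rmult_1_l. apply: Rmult_le_compat_r => //.
apply: one_le_div; simpl in *; lra.
Qed.

Lemma Bnd_0 a : Bnd a 0 = 1.
Proof. by case: a. Qed.

Lemma Bnd_S a j : Bnd a.+1 j.+1 = (INR p ^ (S a) - 1) / (INR p ^ (S j) - 1) * Bnd a j.
Proof. by []. Qed.

Lemma Bnd_0S j : Bnd 0 j.+1 = 0.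
Proof. by []. Qed.

Lemma real_step L Pj Pa y B : 0 < y -> 1 < Pj -> L*(Pj*y - y) <= (Pa*y-y)*B -> L <= (Pa-1)/(Pj-1)*B.
Proof.
move=> hy hP h.
have h2 : L*(Pj-1) <= (Pa-1)*B by nra.
have -> : (Pa-1)/(Pj-1)*B = ((Pa-1)*B) / (Pj-1) by field; lra.
apply: (Rmult_le_reg_r (Pj-1)); first lra.
rewrite /Rdiv Rmult_assoc Rinv_l; lra.
Qed.

Lemma INR_expn q k : INR (q ^ k)%N = INR q ^ k.
Proof. elim: k => [|k IH] //. by rewrite expnS mult_INR IH. Qed.

Lemma Bnd_mono b i m : (Bnd b i <= Bnd (b + m) (i + m)).
Proof.
elim: m => [|m IH]; first by rewrite !addn0; lra.
rewrite !addnS. apply: Rle_trans IH _. exact: Bnd_step.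
Qed.

Lemma small_cases c : (1 <= c <= 5)%N -> sum_f_R0 (Bnd c) c = Sfun p c.
Proof.
have h1 : INR p - 1 <> 0 by lra.
have h2 : INR p * INR p - 1 <> 0 by nra.
have h3 : INR p * (INR p * INR p) - 1 <> 0 by nra.
have h4 : INR p * (INR p * (INR p * INR p)) - 1 <> 0 by nra.
have h5 : INR p * (INR p * (INR p * (INR p * INR p))) - 1 <> 0 by nra.
case: c => [|[|[|[|[|[|c]]]]]] // _; rewrite /Sfun /=; field; auto.
Qed.


Lemma Bnd_ge0' a j : 0 <= Bnd a j.
Proof.
elim: j a => [|j IH] [|a] /=; try lra.
apply: Rmult_le_pos; last exact: IH.
have h1 : 1 <= INR p ^ (S a) by apply: pow_R1_Rle; lra.
have h2 : 1 < INR p ^ (S j) by apply: Rlt_pow_R1; [lra|lia].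
apply: Rdiv_le_0_compat; simpl in *; lra.
Qed.

Lemma Bnd_ub b i : (i <= b)%N -> Bnd b i <= (2 * INR p ^ (b - i)) ^ i.
Proof.
elim: i b => [|i IH] [|b] // hib.
- simpl; lra.
- simpl; lra.
rewrite Bnd_S subSS [(_ ^ i.+1)]/= -/(Bnd b i).
have hB := Bnd_ge0' b i.
have IH' := IH b hib.
set u := INR p ^ (b - i).
have hu : 1 <= u by apply: pow_R1_Rle; lra.
set v := INR p ^ (S i).
have hv : 2 <= v.
  rewrite /v /=. have : 1 <= INR p ^ i by apply: pow_R1_Rle; lra. nra.
have euv : INR p ^ (S b) = u * v by rewrite /u /v -pow_add; congr pow; lia.
rewrite euv -/v.
have r : (u * v - 1) / (v - 1) <= 2 * u.
  apply: (Rmult_le_reg_r (v - 1)); first lra.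
  rewrite /Rdiv Rmult_assoc Rinv_l; nra.
have hr0 : 0 <= (u * v - 1) / (v - 1) by apply: Rdiv_le_0_compat; nra.
apply: Rmult_le_compat => //.
Qed.

Lemma Bnd_ub2 b i : (i <= b)%N -> Bnd b i <= INR p ^ ((b - i + 1) * i).
Proof.
move=> h. apply: Rle_trans (Bnd_ub h) _.
rewrite pow_mult. apply: pow_incr. split.
  have : 0 <= INR p ^ (b - i) by apply: pow_le; lra. lra.
rewrite pow_add /=. have : 0 <= INR p ^ (b - i) by apply: pow_le; lra. nra.
Qed.

Lemma large_case c K : (6 <= c)%N -> 1 <= K ->
  sum_f_R0 (Bnd c) c <= K * Rpower (INR p) (INR (c * c)%N / 2).
Proof.
move=> hc hK.
set Rp := Rpower (INR p) (INR (c * c)%N / 2).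
have hRp : 0 < Rp by rewrite /Rp /Rpower; apply: exp_pos.
have term : forall i, (i <= c)%N -> Bnd c i <= Rp / INR (S c).
  move=> i hi.
  have hSc : 0 < INR (S c) by apply: lt_0_INR; lia.
  apply: (Rmult_le_reg_r (INR (S c))) => //.
  rewrite /Rdiv Rmult_assoc Rinv_l; last lra. rewrite Rmult_1_r.
  have h1 := Bnd_ub2 hi.
  have h2 : INR (S c) <= INR p ^ (c - 3).
    have hp2 : (2 <= p)%N by apply/leP; apply: INR_le; simpl; lra.
    rewrite -INR_expn. apply: le_INR. apply/leP.
    have k2 := key2 hc. rewrite addn1 in k2. apply: (leq_trans k2).
    rewrite leq_exp2r //. lia.
  have h3 : Bnd c i * INR (S c) <= INR p ^ ((c - i + 1) * i) * INR p ^ (c - 3).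
    apply: Rmult_le_compat => //; [exact: Bnd_ge0'| lra].
  apply: Rle_trans h3 _. rewrite -pow_add.
  rewrite -Rpower_pow; last lra.
  apply: Rle_Rpower; first lra.
  have hk := key_exp hc hi.
  have := le_INR _ _ (leP hk). rewrite !mult_INR. simpl. move=> hh.
  have -> : (((c - i + 1) * i + (c - 3))%coq_nat = ((c - i + 1) * i + (c - 3))%N) by [].
  lra.
have term2 : forall n, (n <= c)%coq_nat -> Bnd c n <= Rp / INR (S c) by move=> n /leP; exact: term.
apply: Rle_trans (sum_Rle _ (fun _ => Rp / INR (S c)) c term2) _.
rewrite sum_cte /Rdiv Rmult_assoc Rinv_l; last by apply: not_0_INR.
rewrite Rmult_1_r. rewrite -[X in X <= _]Rmult_1_l. apply: Rmult_le_compat_r; lra.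
Qed.


Lemma Sfun_bound c : (0 < c)%N -> sum_f_R0 (Bnd c) c <= Sfun p c.
Proof.
move=> c0. case: (leqP c 5) => hc.
  rewrite small_cases; first lra. by rewrite c0 hc.
have [k ek] : exists k, c = (k + 6)%N by exists (c - 6)%N; lia.
have hK : 1 <= 2129 / 1000 * Cconst p by have := Cconst_ge1 hp; lra.
rewrite ek.
have -> : Sfun p (k + 6) = 2129 / 1000 * Cconst p * Rpower (INR p) (INR ((k+6) * (k+6))%N / 2).
  rewrite (_ : (k + 6 = k.+4.+2)%N); last by lia. rewrite /Sfun /cconst. reflexivity.
apply: large_case => //. lia.
Qed.
End PP.

Section G.
Local Open Scope group_scope.
Variable gT : finGroupType.
Variable p : nat.
Hypothesis pr : prime p.

Definition Lev (X Y : {group gT}) j := [set H in SubRT X Y | #|H| == p ^ j * #|Y|]%N.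

Lemma count_pairs (X Y : {group gT}) (L : {set {group gT}}) :
  (forall H, H \in L -> (Y \subset H) && (H \subset X)) ->
  (\sum_(H in L) #|H :\: Y| = \sum_(x in X :\: Y) #|[set H in L | x \in H]|)%N.
Proof.
move=> hL.
have e1 : forall H, H \in L -> #|H :\: Y| = (\sum_(x in X :\: Y) (x \in H))%N.
  move=> H /hL /andP [sYH sHX].
  rewrite -sum1_card big_mkcond /= [RHS]big_mkcond /=.
  apply: eq_bigr => x _. rewrite !inE.
  have hx := subsetP sHX x.
  by case: (x \in H) hx; case: (x \in Y); case: (x \in X) => //= /(_ isT).
rewrite (eq_bigr _ e1) exchange_big /=.
apply: eq_bigr => x _. 
rewrite -sum1_card big_mkcond /= [RHS]big_mkcond /=.
by apply: eq_bigr => H _; rewrite !inE; case: (H \in L); case: (x \in H).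
Qed.
End G.

Lemma sum_le_card (T : finType) (A : {set T}) (c : T -> nat) (M : R) :
  (forall x, x \in A -> (INR (c x) <= M)%R) ->
  (INR (\sum_(x in A) c x) <= INR #|A| * M)%R.
Proof.
move=> h. rewrite -sum1_card.
elim/big_rec2: _ => [|x s1 s2 hx IH]; first by simpl; lra.
rewrite !plus_INR /=. have := h x hx. lra.
Qed.

Lemma card_le_sum_cover (T : finType) (A : {set T}) n (F : nat -> {set T}) :
  (forall x, x \in A -> exists2 j, (j < n)%N & x \in F j) -> (#|A| <= \sum_(j < n) #|F j|)%N.
Proof.
move=> h. rewrite -sum1_card.
apply: (@leq_trans (\sum_(x in A) \sum_(j < n) (x \in F j : nat))%N).
  apply: leq_sum => x xA. have [j hj xF] := h x xA.
  by rewrite (bigD1 (Ordinal hj)) //= xF.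
rewrite exchange_big. apply: leq_sum => j _. rewrite -sum1_card [X in (_ <= X)%N]big_mkcond /=.
rewrite big_mkcond /=. apply: leq_sum => x _.
by case: (x \in A); case: (x \in F j).
Qed.

Lemma sum_INR_le (f : nat -> nat) (g : nat -> R) m :
  (forall j, (j <= m)%N -> (INR (f j) <= g j)%R) ->
  (INR (\sum_(j < m.+1) f j) <= sum_f_R0 g m)%R.
Proof.
elim: m => [|m IH] h.
  by rewrite big_ord_recr big_ord0 /= add0n; apply: h.
rewrite big_ord_recr /= plus_INR.
apply: Rplus_le_compat; last exact: h.
apply: IH => j hj; apply: h; exact: leqW.
Qed.

Section G2.
Local Open Scope group_scope.
Variable gT : finGroupType.
Variable p : nat.
Hypothesis pr : prime p.

Lemma pgt1 : (1 < p)%N. Proof. exact: prime_gt1. Qed.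

Lemma powgt1 k : (0 < k)%N -> (1 < p ^ k)%N.
Proof. move=> hk. by rewrite -(expn0 p) ltn_exp2l // pgt1. Qed.

Lemma index_pow (X Y : {group gT}) a : Y \subset X -> #|X| = (p ^ a * #|Y|)%N -> #|X : Y| = (p ^ a)%N.
Proof.
move=> sYX oX. apply/eqP. rewrite -(eqn_pmul2l (cardG_gt0 Y)) Lagrange // oX mulnC //.
Qed.

Lemma mid_pow (X Y K : {group gT}) a : Y \subset K -> K \subset X -> #|X| = (p ^ a * #|Y|)%N ->
  exists2 k, (k <= a)%N & #|K| = (p ^ k * #|Y|)%N.
Proof.
move=> sYK sKX oX.
have sYX := subset_trans sYK sKX.
have := Lagrange_index sKX sYK. rewrite (index_pow sYX oX) => h.
have : (#|K : Y| %| p ^ a)%N by rewrite -h dvdn_mull.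
case/(dvdn_pfactor _ _ pr) => k hk hK. exists k => //.
by rewrite -(Lagrange sYK) hK mulnC.
Qed.

Lemma lev_bound a : forall (X Y : {group gT}) j, Y \subset X -> #|X| = (p ^ a * #|Y|)%N ->
  (INR #|Lev p X Y j| <= Bnd p a j)%R.
Proof.
elim/ltn_ind: a => a IH X Y [|j] sYX oX.
- rewrite [Bnd _ _ _]/=.
  have : (#|Lev p X Y 0| <= 1)%N.
    rewrite -(cards1 Y). apply: subset_leq_card. apply/subsetP => H.
    rewrite !inE => /andP [/andP [sYH _] /eqP oH].
    apply/eqP. apply: group_inj. apply/eqP. by rewrite eq_sym eqEcard sYH oH expn0 mul1n leqnn.
  move/leP => h. have := le_INR _ _ h. rewrite Bnd_0. simpl. by move=> h1.
case: a IH oX => [|a] IH oX.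
- rewrite (_ : Lev p X Y j.+1 = set0); first by rewrite cards0 Bnd_0S /=; lra.
  apply/setP => H; rewrite !inE; apply/negbTE; apply/negP => /andP [/andP [_ sHX] /eqP oH].
  have := subset_leq_card sHX. rewrite oH oX expn0 mul1n.
  have := powgt1 (isT : (0 < j.+1)%N). have := cardG_gt0 Y. 
  move: (p ^ j.+1)%N #|Y| => P y. nia.
set L := Lev p X Y j.+1.
have hL : forall H, H \in L -> (Y \subset H) && (H \subset X).
  by move=> H; rewrite !inE => /andP [].
have cnt := count_pairs hL.
have lhs : (\sum_(H in L) #|H :\: Y| = #|L| * (p ^ j.+1 * #|Y| - #|Y|))%N.
  rewrite -sum_nat_const. apply: eq_bigr => H HL.
  move: HL; rewrite !inE => /andP [/andP [sYH _] /eqP oH].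
  by rewrite cardsD (setIidPr sYH) oH.
have per : forall x, x \in X :\: Y -> (INR #|[set H in L | x \in H]| <= Bnd p a j)%R.
  move=> x; rewrite inE => /andP [xnY xX].
  pose K := (Y <*> <[x]>)%G.
  have sYK : Y \subset K by exact: joing_subl.
  have xK : x \in K by apply: (subsetP (joing_subr Y <[x]>)); exact: cycle_id.
  have sKX : K \subset X by rewrite join_subG sYX cycle_subG xX.
  have [k hk oK] := mid_pow sYK sKX oX.
  have k0 : (0 < k)%N.
    case: k hk oK => // _ oK. exfalso. move: xnY. 
    have -> : Y = K. apply: group_inj. apply/eqP. by rewrite eqEcard sYK oK expn0 mul1n leqnn.
    by rewrite xK.
  case: (leqP k j.+1) => hkj; last first.
    rewrite (_ : [set H in L | x \in H] = set0); first by rewrite cards0 /=; apply: Bnd_ge0.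
    apply/setP => H; rewrite !inE; apply/negbTE; apply/negP => /andP [/andP [/andP [sYH sHX] /eqP oH] xH].
    have sKH : K \subset H by rewrite join_subG sYH cycle_subG xH.
    have := subset_leq_card sKH. rewrite oK oH leq_pmul2r ?cardG_gt0 // leq_exp2l ?pgt1 //.
    by rewrite leqNgt hkj.
  have oX' : #|X| = (p ^ (a.+1 - k) * #|K|)%N.
    by rewrite oX oK mulnA -expnD subnK.
  have sub : [set H in L | x \in H] \subset Lev p X K (j.+1 - k).
    apply/subsetP => H; rewrite !inE => /andP [/andP [/andP [sYH sHX] /eqP oH] xH].
    have sKH : K \subset H by rewrite join_subG sYH cycle_subG xH.
    by rewrite sKH sHX /= oH oK mulnA -expnD subnK.
  have := subset_leq_card sub. move/leP/le_INR => h1.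
  apply: Rle_trans h1 _.
  have lt : (a.+1 - k < a.+1)%N by rewrite ltn_subrL k0.
  apply: Rle_trans (IH _ lt X K _ sKX oX') _.
  have := Bnd_mono pr (a.+1 - k) (j.+1 - k) (k.-1).
  have -> : (a.+1 - k + k.-1 = a)%N by lia.
  by have -> : (j.+1 - k + k.-1 = j)%N by lia.
have := sum_le_card per. rewrite -cnt lhs.
have -> : #|X :\: Y| = (p ^ a.+1 * #|Y| - #|Y|)%N by rewrite cardsD (setIidPr sYX) oX.
have py := powgt1 (isT : (0 < a.+1)%N). have pj := powgt1 (isT : (0 < j.+1)%N).
rewrite !mult_INR !minus_INR ?mult_INR ?INR_expn; last first.
  by apply/leP; rewrite -{1}[#|Y|]mul1n leq_pmul2r ?cardG_gt0 // ltnW.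
  by apply/leP; rewrite -{1}[#|Y|]mul1n leq_pmul2r ?cardG_gt0 // ltnW.
rewrite Bnd_S. apply: real_step.
- apply: lt_0_INR; apply/ltP; exact: cardG_gt0.
- rewrite -INR_expn. apply: (lt_INR 1); apply/ltP; exact: pj.
Qed.

Lemma sub_pp (X Y : {group gT}) a : Y \subset X -> #|X| = (p ^ a * #|Y|)%N ->
  (INR #|SubRT X Y| <= sum_f_R0 (Bnd p a) a)%R.
Proof.
move=> sYX oX.
have h1 : (#|SubRT X Y| <= \sum_(j < a.+1) #|Lev p X Y j|)%N.
  apply: card_le_sum_cover => H; rewrite inE => /andP [sYH sHX].
  have [k hk oH] := mid_pow sYH sHX oX.
  exists k; first by rewrite ltnS.
  by rewrite !inE sYH sHX oH /=.
apply: Rle_trans (le_INR _ _ (leP h1)) _.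
have := @sum_INR_le (fun j => #|Lev p X Y j|) (Bnd p a) a.
move=> hh. apply: hh => j _. exact: lev_bound.
Qed.

Lemma pp_final (X Y : {group gT}) a : (0 < a)%N -> Y \subset X -> #|X| = (p ^ a * #|Y|)%N ->
  (INR #|SubRT X Y| <= Sfun p a)%R.
Proof.
move=> a0 sYX oX. apply: Rle_trans (sub_pp sYX oX) _. exact: Sfun_bound.
Qed.
End G2.

Lemma Rmult_assoc' : associative Rmult. Proof. by move=> x y z; rewrite Rmult_assoc. Qed.
Lemma Rmult_1_l' : left_id R1 Rmult. Proof. by move=> x; rewrite Rmult_1_l. Qed.
HB.instance Definition _ := Monoid.isComLaw.Build R R1 Rmult Rmult_assoc' Rmult_comm Rmult_1_l'.

Lemma prod_split_const l (a : R) (S : 'I_l -> R) :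
  \big[Rmult/R1]_(i < l) (a * S i)%R = (a ^ l * \big[Rmult/R1]_(i < l) S i)%R.
Proof.
rewrite big_split /=. congr Rmult.
rewrite big_const_ord. elim: l {S} => [|l IH] //=. by rewrite IH.
Qed.

Lemma prod_INR_le (I : finType) (f : I -> nat) (g : I -> R) :
  (forall i, INR (f i) <= g i)%R -> (INR (\prod_i f i) <= \big[Rmult/R1]_i g i)%R.
Proof.
move=> h. elim/big_rec2: _ => [|i x y _ IH]; first by simpl; lra.
rewrite mult_INR. apply: Rmult_le_compat; [exact: pos_INR | exact: pos_INR | exact: h | exact: IH].
Qed.

Lemma card_le_sum_cover2 (I T : finType) (A : {set T}) (B : {set I}) (F : I -> {set T}) :
  (forall x, x \in A -> exists2 i, i \in B & x \in F i) -> (#|A| <= \sum_(i in B) #|F i|)%N.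
Proof.
move=> h. rewrite -sum1_card.
apply: (@leq_trans (\sum_(x in A) \sum_(i in B) (x \in F i : nat))%N).
  apply: leq_sum => x xA. have [j hj xF] := h x xA.
  by rewrite (bigD1 j) //= xF.
rewrite exchange_big. apply: leq_sum => j _. rewrite -sum1_card [X in (_ <= X)%N]big_mkcond /=.
rewrite big_mkcond /=. apply: leq_sum => x _.
by case: (x \in A); case: (x \in F j).
Qed.

Lemma card_fam (I J : finType) (Q : I -> {set J}) :
  #|[set f : {ffun I -> J} | [forall i, f i \in Q i]]| = (\prod_i #|Q i|)%N.
Proof.
rewrite (eq_bigr (fun i => \sum_(j in Q i) 1)%N); last by move=> i _; rewrite sum1_card.
rewrite bigA_distr_big_dep -sum1_card. 
rewrite [RHS](eq_bigr (fun _ => 1%N)); last by move=> f _; rewrite big1_eq.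
apply: eq_bigl => f. rewrite inE. by apply/forallP/familyP.
Qed.

Section Main.
Local Open Scope group_scope.
Variable gT : finGroupType.
Variables (G T : {group gT}) (l : nat) (p c : 'I_l -> nat).
Hypotheses (sTG : T \subset G) (prp : forall i, prime (p i)) (injp : injective p)
  (nidx : #|G : T| = (\prod_(i < l) p i ^ c i)%N).

Lemma part_n i : (#|G : T|`_(p i) = p i ^ c i)%N.
Proof.
rewrite nidx (bigD1 i) //=.
have pos1 : (0 < p i ^ c i)%N by rewrite expn_gt0 prime_gt0.
have pnat_rest : (p i)^'.-nat (\prod_(j < l | j != i) p j ^ c j)%N.
  apply big_ind => //; first by move=> x y hx hy; rewrite pnatM hx hy.
  move=> j hj. rewrite pnatX (pnatE _ (prp j)) !inE.
  apply/orP; left. apply/negP => /eqP hji. move: hj. by rewrite (injp hji) eqxx.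
have pos2 : (0 < \prod_(j < l | j != i) p j ^ c j)%N.
  by apply: prodn_gt0 => j; rewrite expn_gt0 prime_gt0.
rewrite partnM // (part_p'nat pnat_rest) muln1 part_pnat_id //.
by rewrite pnatX pnat_id // orbT.
Qed.


Variable P : 'I_l -> {group gT}.
Hypothesis sylP : forall i, (p i).-Sylow(G) (P i).

Lemma cardP i : #|P i| = (#|T|`_(p i) * p i ^ c i)%N.
Proof.
rewrite (card_Hall (sylP i)) -(Lagrange sTG) partnM ?cardG_gt0 ?part_n //.

Qed.

Definition good i (H : {group gT}) g :=
  [&& g \in G, (p i).-Sylow(T :^ g) (P i :&: T :^ g) & (p i).-Sylow(H :^ g) (P i :&: H :^ g)].

Lemma good_exists i (H : {group gT}) : H \in SubRT G T -> exists g, good i H g.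
Proof.
rewrite inE => /andP [sTH sHG].
have [D sylD] := Sylow_exists (p i) T.
have sDH : D \subset H := subset_trans (pHall_sub sylD) sTH.
have [Q sylQ sDQ] := Sylow_superset sDH (pHall_pgroup sylD).
have sQG : Q \subset G := subset_trans (pHall_sub sylQ) sHG.
have [x xG sQx] := Sylow_Jsub (sylP i) sQG (pHall_pgroup sylQ).
exists x. rewrite /good xG /=.
have hQ : (p i).-Sylow(H :^ x) (Q :^ x) by rewrite pHallJ2.
have hD : (p i).-Sylow(T :^ x) (D :^ x) by rewrite pHallJ2.
have e1 : (P i :&: H :^ x) :=: Q :^ x.
  apply: (sub_pHall hQ).
  - exact: pgroupS (subsetIl _ _) (pHall_pgroup (sylP i)).
  - by rewrite subsetI sQx conjSg (pHall_sub sylQ).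
  - exact: subsetIr.
have e2 : (P i :&: T :^ x) :=: D :^ x.
  apply: (sub_pHall hD).
  - exact: pgroupS (subsetIl _ _) (pHall_pgroup (sylP i)).
  - by rewrite subsetI conjSg (pHall_sub sylD) andbT; apply: subset_trans sQx; rewrite conjSg.
  - exact: subsetIr.
by rewrite e1 e2 hQ hD.
Qed.

Lemma good_closed i (H : {group gT}) g y u : H \in SubRT G T -> good i H g ->
  y \in T :^ g -> u \in P i -> good i H (g * (y * u)).
Proof.
rewrite inE => /andP [sTH sHG] /and3P [gG sylT sylH] yT uP.
have uG : u \in G := subsetP (pHall_sub (sylP i)) u uP.
have yG : y \in G.
  have : T :^ g \subset G by rewrite -(conjGid gG) conjSg.
  by move/subsetP; apply.
have yH : y \in H :^ g by move: yT; apply/subsetP; rewrite conjSg.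
have eT : T :^ (g * (y * u)) = (T :^ g) :^ u.
  by rewrite !conjsgM (conjGid (G := (T :^ g)%G) yT).
have eH : H :^ (g * (y * u)) = (H :^ g) :^ u.
  by rewrite !conjsgM (conjGid (G := (H :^ g)%G) yH).
have eP : P i :^ u = P i by rewrite conjGid.
apply/and3P; split; first by rewrite !groupM.
- by rewrite eT -{1}eP -conjIg pHallJ2.
- by rewrite eH -{1}eP -conjIg pHallJ2.
Qed.

Definition V i (H : {group gT}) := [set g | good i H g].

Lemma V_card i (H : {group gT}) : H \in SubRT G T -> (#|T| * p i ^ c i <= #|V i H|)%N.
Proof.
move=> HS. have [g gg] := good_exists i HS.
have sub : g *: (T :^ g * P i) \subset V i H.
  apply/subsetP => x. rewrite mem_lcoset => /mulsgP [y u yT uP ex].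
  rewrite inE. have -> : x = g * (y * u) by rewrite -ex mulKVg.
  exact: good_closed.
apply: leq_trans (subset_leq_card sub). rewrite card_lcoset.
have := mul_cardG (T :^ g) (P i).
case/and3P: gg => _ sylT _.
rewrite setIC (card_Hall sylT) !cardJg cardP.
have pos : (0 < #|T|`_(p i))%N by exact: part_gt0.
rewrite mulnCA [X in _ = X]mulnC => /eqP. rewrite eqn_pmul2l // => /eqP ->. by [].
Qed.

Definition Im i (H : {group gT}) : {set gT * {group gT}} := [set (g, (P i :&: H :^ g)%G) | g in V i H].
Definition E (H : {group gT}) := [set F : {ffun 'I_l -> gT * {group gT}} | [forall i, F i \in Im i H]].

Lemma card_E H : #|E H| = (\prod_i #|V i H|)%N.
Proof.
rewrite card_fam. apply: eq_bigr => i _. apply: card_imset.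
by move=> x y /(congr1 fst).
Qed.

Definition Dec (F : {ffun 'I_l -> gT * {group gT}}) : {set gT} :=
  <<T :|: \bigcup_(i < l) ((F i).2 :^ ((F i).1)^-1)>>.

Lemma coprime_prod_n m : (forall i, coprime m (p i)) -> coprime m #|G : T|.
Proof.
move=> h. rewrite nidx. apply big_ind => //.
- exact: coprimen1.
- by move=> x y hx hy; rewrite coprimeMr hx hy.
- by move=> i _; apply: coprimeXr.
Qed.

Lemma decode (H : {group gT}) F : H \in SubRT G T -> F \in E H -> Dec F = H.
Proof.
rewrite inE => /andP [sTH sHG]. rewrite inE => /forallP hF.
have hFi : forall i, exists2 g, good i H g & F i = (g, (P i :&: H :^ g)%G).
  move=> i. have /imsetP [g gV ->] := hF i. exists g => //. by move: gV; rewrite inE.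
have sDH : Dec F \subset H.
  rewrite /Dec gen_subG subUset sTH /=. apply/bigcupsP => i _.
  have [g _ ->] := hFi i. by rewrite /= sub_conjgV subsetIr.
have sTD0 : T \subset Dec F by rewrite /Dec; apply: (subset_trans (subsetUl _ _) (sub_gen _)).
apply/eqP. rewrite eqEsubset sDH /=.
have gD : group_set (Dec F) by rewrite /Dec; exact: groupP.
pose DG := Group gD.
have sDH' : DG \subset H by [].
have sTD : T \subset DG by [].
change (H \subset gval DG). rewrite -indexg_eq1.
set m := #|H : DG|.
have mdiv : (m %| #|G : T|)%N.
  rewrite -(Lagrange_index sHG sTH) -(Lagrange_index sDH' sTD).
  by apply: dvdn_mull; apply: dvdn_mulr.
have cop : forall i, coprime m (p i).
  move=> i. have [g /and3P [_ _ sylH] eFi] := hFi i.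
  set Q := ((P i :&: H :^ g) :^ g^-1)%G.
  have sylQ : (p i).-Sylow(H) Q.
    rewrite -(pHallJ2 _ _ _ g^-1) conjsgK in sylH. exact: sylH.
  have sQD : Q \subset DG.
    have h1 : (F i).2 :^ (F i).1^-1 \subset \bigcup_(j < l) (F j).2 :^ (F j).1^-1 := bigcup_sup i isT.
    have h2 := subset_trans h1 (subsetUr T _).
    have h3 := subset_trans h2 (sub_gen _).
    rewrite eFi /= in h3. exact: h3.
  case/and3P: sylQ => sQH _ hnat.
  have : (m %| #|H : Q|)%N by rewrite -(Lagrange_index sDH' sQD) dvdn_mulr.
  move=> hd. have := pnat_dvd hd hnat. rewrite p'natE // => hnd.
  by rewrite coprime_sym prime_coprime.
have := coprime_prod_n cop. rewrite /coprime. move/eqP. 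
by rewrite (gcdn_idPl mdiv) => ->.
Qed.

Hypothesis hc : forall i, (0 < c i)%N.

Lemma Sub_bound_g i g : (p i).-Sylow(T :^ g) (P i :&: T :^ g) ->
  (INR #|SubRT (P i) (P i :&: T :^ g)%G| <= Sfun (p i) (c i))%R.
Proof.
move=> sylT. apply: (pp_final (prp i) (hc i)); first exact: subsetIl.
rewrite cardP /= (card_Hall sylT) cardJg. by rewrite mulnC.
Qed.

Lemma S_nonneg i : (0 <= Sfun (p i) (c i))%R.
Proof.
have TS : T \in SubRT G T by rewrite inE subxx sTG.
have [g /and3P [_ sylT _]] := good_exists i TS.
apply: Rle_trans (Sub_bound_g sylT). exact: pos_INR.
Qed.

Definition W i : {set gT * {group gT}} := [set gk | [&& gk.1 \in G,
  (p i).-Sylow(T :^ gk.1) (P i :&: T :^ gk.1) & gk.2 \in SubRT (P i) (P i :&: T :^ gk.1)%G]].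
Definition Tup := [set F : {ffun 'I_l -> gT * {group gT}} | [forall i, F i \in W i]].

Lemma E_sub H : H \in SubRT G T -> E H \subset Tup.
Proof.
rewrite inE => /andP [sTH sHG]. apply/subsetP => F. rewrite !inE => /forallP hF.
apply/forallP => i. have /imsetP [g gV ->] := hF i. move: gV; rewrite !inE => /and3P [gG sT _].
rewrite /= gG sT /= subsetIl andbT. apply: setIS. by rewrite conjSg.
Qed.

Lemma inj_E F (H1 H2 : {group gT}) : H1 \in SubRT G T -> H2 \in SubRT G T ->
  F \in E H1 -> F \in E H2 -> H1 = H2.
Proof.
move=> h1 h2 f1 f2. apply: group_inj. by rewrite -(decode h1 f1) -(decode h2 f2).
Qed.

Lemma main_count : (#|SubRT G T| * (#|T| ^ l * #|G : T|) <= \prod_i #|W i|)%N.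
Proof.
have step1 : forall H, H \in SubRT G T -> (#|T| ^ l * #|G : T| <= #|E H|)%N.
  move=> H HS. rewrite card_E nidx.
  have -> : (#|T| ^ l = \prod_(i < l) #|T|)%N by rewrite prod_nat_const card_ord.
  rewrite -big_split /=. apply: leq_prod => i _. exact: V_card.
rewrite -card_fam -/Tup.
apply: (@leq_trans (\sum_(H in SubRT G T) #|E H|)%N).
  rewrite -sum_nat_const. apply: leq_sum => H HS. exact: step1.
have e : forall H, H \in SubRT G T -> #|E H| = (\sum_(F in Tup) (F \in E H))%N.
  move=> H HS. rewrite -sum1_card [RHS]big_mkcond /= big_mkcond /=.
  apply: eq_bigr => F _. have := subsetP (E_sub HS) F.
  case: (F \in E H) => [->|_] //. by case: (F \in Tup).
rewrite (eq_bigr _ e) exchange_big /= -sum1_card.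
apply: leq_sum => F _.
case: (pickP (fun H => (H \in SubRT G T) && (F \in E H))) => [H0 /andP [H0S FH0] | none].
  rewrite (bigD1 H0) //= FH0 big1 // => H /andP [HS ne].
  case FH: (F \in E H) => //. by move: ne; rewrite (inj_E HS H0S FH FH0) eqxx.
rewrite big1 // => H HS. by have := none H; rewrite HS /= => ->.
Qed.

Lemma W_bound i : (INR #|W i| <= INR #|G| * Sfun (p i) (c i))%R.
Proof.
pose Fg g := [set gk in W i | gk.1 == g].
have h1 : (#|W i| <= \sum_(g in G) #|Fg g|)%N.
  apply: card_le_sum_cover2 => gk gkW. exists gk.1.
  - by move: gkW; rewrite inE => /and3P [].
  - by rewrite inE gkW eqxx.
apply: Rle_trans (le_INR _ _ (leP h1)) _.
apply: sum_le_card => g gG.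
case sy: ((p i).-Sylow(T :^ g) (P i :&: T :^ g)).
  have sub : Fg g \subset [set (g, K) | K in SubRT (P i) (P i :&: T :^ g)%G].
    apply/subsetP => [[g' K]]. rewrite !inE /= => /andP [/and3P [_ _ KS] /eqP eg].
    rewrite eg in KS *. apply/imsetP; exists K => //. by rewrite inE.
  apply: Rle_trans _ (Sub_bound_g sy).
  apply: le_INR. apply/leP. apply: leq_trans (subset_leq_card sub) _. exact: leq_imset_card.
rewrite (_ : Fg g = set0); first by rewrite cards0 /=; apply: S_nonneg.
apply/setP => [[g' K]]. rewrite !inE /=. apply/negbTE/negP => /andP [/and3P [_ sy' _] /eqP eg].
subst g'. by rewrite sy in sy'.
Qed.

Lemma final_bound :
  (INR #|SubRT G T| * INR (#|T| ^ l * #|G : T|) <= INR #|G| ^ l * \big[Rmult/R1]_(i < l) Sfun (p i) (c i))%R.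
Proof.
rewrite -mult_INR. apply: Rle_trans (le_INR _ _ (leP main_count)) _.
rewrite -prod_split_const. apply: prod_INR_le => i. exact: W_bound.
Qed.
End Main.

Theorem proposition3p2 (gT : finGroupType) (R T : {group gT})
  (l : nat) (p c : 'I_l -> nat) :
  T \proper R ->
  (forall i, prime (p i)) ->
  injective p ->
  (forall i, (0 < c i)%N) ->
  (#|R : T|)%g = (\prod_(i < l) p i ^ c i)%N ->
  Rle (INR #|SubRT R T|)
      (Rmult (pow (INR (#|R : T|)%g) (l - 1)%N)
             (\big[Rmult/R1]_(i < l) Sfun (p i) (c i))).
Proof.
move=> prTR prp injp hc nidx.
have sTR := proper_sub prTR.
pose P i := sval (Sylow_exists (p i) R).
have sylP : forall i, ((p i).-Sylow(R) (P i))%g by move=> i; exact: (svalP (Sylow_exists (p i) R)).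
have fb := @final_bound gT R T l p c sTR prp injp nidx P sylP hc.
case: l p c prp injp hc nidx P sylP fb => [|l'] p c prp injp hc nidx P sylP fb.
  exfalso. move: nidx. rewrite big_ord0 => /eqP. rewrite indexg_eq1.
  by move: prTR; rewrite properE => /andP [_ /negbTE ->].
have -> : (l'.+1 - 1 = l')%N by rewrite subn1.
move: fb. rewrite -(Lagrange sTR) !mult_INR INR_expn.
set A := INR #|SubRT R T|. set t := INR #|T|. set N := INR #|R : T|%g.
set Pi := \big[Rmult/R1]_(i < l'.+1) Sfun (p i) (c i).
have ht : (0 < t)%R by apply: lt_0_INR; apply/ltP; exact: cardG_gt0.
have hN : (0 < N)%R by apply: lt_0_INR; apply/ltP; exact: indexg_gt0.
rewrite Rpow_mult_distr => h.
have hpos : (0 < t ^ l'.+1 * N)%R by apply: Rmult_lt_0_compat => //; apply: pow_lt.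
apply: (Rmult_le_reg_r (t ^ l'.+1 * N)) => //.
have -> : (N ^ l' * Pi * (t ^ l'.+1 * N) = t ^ l'.+1 * N ^ l'.+1 * Pi)%R by rewrite /=; ring.
exact: h.
Qed.
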